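(* Consider the deterministic multiclass single-server system MCSS(RO) described in the context, with all $\lambda_j>0$, $\rho<1$, and constants $\Gamma_{a,j},\Gamma_{s,j}\ge0$ such that for all $k\ge1$ and $j=1,\dots,J$, $$\Big|\sum_{i=1}^k U^j_i-\lambda_j^{-1}k\Big|\le\Gamma_{a,j}\phi(k),\qquad \Big|\sum_{i=1}^k V^j_i-\mu_j^{-1}k\Big|\le\Gamma_{s,j}\phi(k).$$ Let $\Gamma=\max_j(\Gamma_{a,j},\Gamma_{s,j})$ and assume $\min_j\lambda_j\Gamma\ge e^{2e}$. Let $B$ be the duration of the busy period initiated at time $0$. Then $$B\le \frac{5(4J+3)^2\bar\lambda_{\max}^3\Gamma^4}{(1-\rho)^2}\ln\ln\frac{2(4J+3)\bar\lambda_{\max}^2\Gamma^2}{1-\rho},$$ and $$\sup_{0\le t\le B}W(t)\le \frac{2(4J+3)^2\bar\lambda_{\max}^3\Gamma^4}{1-\rho}\ln\ln\frac{(4J+3)\bar\lambda_{\max}^2\Gamma^2}{1-\rho}+\Gamma+3\bar\lambda_{\max}^2\Gamma^3.$$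
   Context: $\phi(x)=\sqrt{x\ln\ln x}$ for $x\ge e^e$ and $\phi(x)=1$ otherwise. MCSS(RO): one server, $J$ job classes with infinite buffers $B_1,\dots,B_J$; at time $0$ there is exactly one job in every buffer. For class $j$, deterministic nonnegative sequences $(U^j_k)_{k\ge1}$ (the $k$-th external arrival to class $j$ occurs at time $\sum_{i\le k}U^j_i$) and $(V^j_k)_{k\ge1}$ (service requirement of the $k$-th job of class $j$). $A_j(t)=\max\{k\ge0:\sum_{i=1}^kU^j_i\le t\}$, $A(t)=(A_j(t))_j$. Routing matrix $P\in\{0,1\}^{J\times J}$ with row sums in $\{0,1\}$ and $P^N=0$ for some $N$: after service in class $i$ a job moves to class $j$ if $P_{ij}=1$, otherwise leaves. The scheduling policy is an arbitrary work-conserving policy (FIFO within a class). $\lambda=(\lambda_j)$, $\bar\lambda=(I-P^T)^{-1}\lambda$, $\bar\lambda_{\max}=\max_j\bar\lambda_j$, $\bar A(t)=(I-P^T)^{-1}A(t)$, $m_j=\mu_j^{-1}$, $\rho=\sum_j\bar\lambda_j/\mu_j$. $W(t)$ is the workload at time $t$ (time needed to clear all work present, without further external arrivals); during the busy period starting at $0$ the paper uses the identity $W(t)=\sum_{j=1}^J\sum_{i=1}^{\bar A_j(t)}V^j_i-t$, and $B$ is the end of this busy period. *)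

(* Defs.v *)
From Stdlib Require Import Reals Lra Lia.
Open Scope R_scope.

Fixpoint rsum (n : nat) (f : nat -> R) : R :=
  match n with O => 0 | S m => rsum m f + f m end.
Fixpoint nsum (n : nat) (f : nat -> nat) : nat :=
  match n with O => 0%nat | S m => (nsum m f + f m)%nat end.
(* max_{j<n} f j, for nonnegative families (0 for n = 0) *)
Fixpoint rmaxn (n : nat) (f : nat -> R) : R :=
  match n with O => 0 | S m => Rmax (rmaxn m f) (f m) end.

Definition phi (x : R) : R :=
  if Rle_dec (exp (exp 1)) x then sqrt (x * ln (ln x)) else 1.

(* J x J nat matrices, indices 0..J-1 *)
Definition nmatmul (J : nat) (A B : nat -> nat -> nat) (i k : nat) : nat :=
  nsum J (fun j => (A i j * B j k)%nat).
Fixpoint nmatpow (J : nat) (P : nat -> nat -> nat) (n : nat) : nat -> nat -> nat :=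
  match n with
  | O => fun i j => if Nat.eqb i j then 1%nat else 0%nat
  | S m => nmatmul J (nmatpow J P m) P
  end.
Definition mtrans (P : nat -> nat -> nat) : nat -> nat -> nat := fun i j => P j i.

(* (I - P^T)^{-1} = sum_{n<N} (P^T)^n, valid whenever P^N = 0 *)
Definition invIPT (J N : nat) (P : nat -> nat -> nat) (i j : nat) : nat :=
  nsum N (fun n => nmatpow J (mtrans P) n i j).

Definition Abar (J N : nat) (P : nat -> nat -> nat) (A : nat -> R -> nat)
  (j : nat) (t : R) : nat :=
  nsum J (fun i => (invIPT J N P j i * A i t)%nat).

Definition lambar (J N : nat) (P : nat -> nat -> nat) (lam : nat -> R) (j : nat) : R :=
  rsum J (fun i => INR (invIPT J N P j i) * lam i).

Definition rho (J N : nat) (P : nat -> nat -> nat) (lam mu : nat -> R) : R :=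
  rsum J (fun j => lambar J N P lam j / mu j).

(* partial U k = sum_{i=1}^k U_i  (sequences indexed from 1; index 0 unused) *)
Definition partial (U : nat -> R) (k : nat) : R := rsum k (fun i => U (S i)).

Definition IsArrivalCount (J : nat) (U : nat -> nat -> R) (A : nat -> R -> nat) : Prop :=
  forall j t, (j < J)%nat -> 0 <= t ->
    partial (U j) (A j t) <= t /\
    (forall k, partial (U j) k <= t -> (k <= A j t)%nat).

(* W(t) = sum_j sum_{i=1}^{Abar_j(t)} V^j_i - t (identity used during the busy period) *)
Definition workload (J N : nat) (P : nat -> nat -> nat) (A : nat -> R -> nat)
  (V : nat -> nat -> R) (t : R) : R :=
  rsum J (fun j => partial (V j) (Abar J N P A j t)) - t.

Definition IsBusyEnd (W : R -> R) (B : R) : Prop :=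
  0 <= B /\ (forall t, 0 <= t < B -> 0 < W t) /\ W B <= 0.

(* Main.v *)
Require Import Defs.
From Stdlib Require Import Reals Lra Lia Psatz.
Open Scope R_scope.

Lemma rsum_ext n f g : (forall i, (i < n)%nat -> f i = g i) -> rsum n f = rsum n g.
Proof. induction n; simpl; intros H; auto. rewrite IHn by (intros; apply H; lia). rewrite H by lia. auto. Qed.
Lemma rsum_le n f g : (forall i, (i < n)%nat -> f i <= g i) -> rsum n f <= rsum n g.
Proof. induction n; simpl; intros H; [lra|]. assert (H1 := IHn (fun i Hi => H i ltac:(lia))). assert (H2 := H n ltac:(lia)). lra. Qed.
Lemma rsum_scal n c f : rsum n (fun i => c * f i) = c * rsum n f.
Proof. induction n; simpl; [ring|]. rewrite IHn; ring. Qed.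
Lemma rsum_plus n f g : rsum n (fun i => f i + g i) = rsum n f + rsum n g.
Proof. induction n; simpl; [ring|]. rewrite IHn; ring. Qed.
Lemma rsum_const n c : rsum n (fun _ => c) = INR n * c.
Proof. induction n; cbn [rsum]; [simpl; ring|]. rewrite IHn, S_INR; ring. Qed.
Lemma rsum_nonneg n f : (forall i, (i < n)%nat -> 0 <= f i) -> 0 <= rsum n f.
Proof. intros H. replace 0 with (rsum n (fun _ => 0)). apply rsum_le; auto. rewrite rsum_const; ring. Qed.
Lemma rsum_ge_term n f k : (forall i, (i < n)%nat -> 0 <= f i) -> (k < n)%nat -> f k <= rsum n f.
Proof. induction n; simpl; intros H Hk; [lia|].
  destruct (Nat.eq_dec k n) as [->|Hne].
  - assert (0 <= rsum n f) by (apply rsum_nonneg; intros; apply H; lia). lra.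
  - assert (f k <= rsum n f) by (apply IHn; [intros; apply H; lia| lia]). assert (0 <= f n) by (apply H; lia). lra.
Qed.
Lemma INR_nsum n f : INR (nsum n f) = rsum n (fun i => INR (f i)).
Proof. induction n; simpl; auto. rewrite plus_INR, IHn. auto. Qed.
Lemma nsum_ext n f g : (forall i, (i < n)%nat -> f i = g i) -> nsum n f = nsum n g.
Proof. induction n; simpl; intros H; auto. rewrite IHn by (intros; apply H; lia). rewrite H by lia. auto. Qed.
Lemma nsum_ge_term n f k : (k < n)%nat -> (f k <= nsum n f)%nat.
Proof. induction n; simpl; intros Hk; [lia|]. destruct (Nat.eq_dec k n) as [->|]; [lia|]. specialize (IHn ltac:(lia)). lia. Qed.
Lemma rmaxn_ge n f k : (k < n)%nat -> f k <= rmaxn n f.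
Proof. induction n; simpl; intros Hk; [lia|]. destruct (Nat.eq_dec k n) as [->|]; [apply Rmax_r|].
  eapply Rle_trans; [apply IHn; lia| apply Rmax_l]. Qed.
Lemma rmaxn_nonneg n f : 0 <= rmaxn n f.
Proof. induction n; simpl; [lra|]. eapply Rle_trans; [apply IHn|apply Rmax_l]. Qed.

Lemma ln_le x y : 0 < x -> x <= y -> ln x <= ln y.
Proof. intros Hx Hxy. destruct (Req_dec x y) as [->|]; [lra|]. left; apply ln_increasing; lra. Qed.
Lemma ln_le_m1 y : 0 < y -> ln y <= y - 1.
Proof. intros. pose proof (exp_ineq1_le (ln y)). rewrite exp_ln in H0; lra. Qed.
Lemma sqrt_le_b a b : 0 <= b -> a <= b * b -> sqrt a <= b.
Proof. intros. rewrite <- (sqrt_square b) by auto. apply sqrt_le_1_alt; auto. Qed.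
Lemma phi_nonneg x : 0 <= phi x.
Proof. unfold phi. destruct Rle_dec; [apply sqrt_pos|lra]. Qed.
Lemma exp1_ge2 : 2 <= exp 1.
Proof. pose proof (exp_ineq1_le 1). lra. Qed.
Lemma exp_le_mono a b : a <= b -> exp a <= exp b.
Proof. intros. destruct (Req_dec a b) as [->|]; [lra|]. left; apply exp_increasing; lra. Qed.

Lemma phi_global x y : 1 <= x -> 0 <= y -> phi y <= 1 + y / (2 * x) + 2 * x * ln (2 * x).
Proof.
  intros Hx Hy. assert (Hl2 : 0 <= ln (2 * x)) by (rewrite <- ln_1; apply ln_le; lra).
  assert (0 <= y / (2*x)) by (unfold Rdiv; apply Rmult_le_pos; [lra| left; apply Rinv_0_lt_compat; lra]).
  unfold phi. destruct Rle_dec as [He|He]; [|nra].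
  assert (Hee : exp 1 <= exp (exp 1)) by (apply exp_le_mono; pose proof exp1_ge2; lra).
  pose proof exp1_ge2.
  assert (Hly : exp 1 <= ln y) by (rewrite <- (ln_exp (exp 1)); apply ln_le; [apply exp_pos|lra]).
  set (u := ln (ln y)).
  assert (Hu0 : 0 <= u) by (unfold u; rewrite <- ln_1; apply ln_le; lra).
  assert (Hu1 : u <= ln y - 1) by (apply ln_le_m1; lra).
  set (e := / (2 * x)).
  assert (He0 : 0 < e) by (unfold e; apply Rinv_0_lt_compat; lra).
  assert (Hly2 : ln (e * e * y) <= e * e * y - 1) by (apply ln_le_m1; nra).
  rewrite ln_mult in Hly2 by nra. rewrite ln_mult in Hly2 by nra.
  assert (Hle : ln e = - ln (2 * x)) by (unfold e; rewrite ln_Rinv; lra).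
  rewrite Hle in Hly2.
  assert (Hex : e * (2 * x) = 1) by (unfold e; field; lra).
  replace (y / (2 * x)) with (e * y) by (unfold e; field; lra).
  apply Rle_trans with ((e * y + u * (2 * x)) / 2).
  - apply sqrt_le_b. nra.
    assert (Hyu : y * u = (e*y) * (u * (2*x))) by (transitivity (y*u*(e*(2*x))); [rewrite Hex; ring|ring]).
    rewrite Hyu; pose proof (pow2_ge_0 (e*y - u*(2*x))); nra.
  - nra.
Qed.

Lemma phi_local y M d : 0 <= y -> y <= M -> exp (exp 1) <= M -> 0 < d ->
  phi y <= 1 + d * y + ln (ln M) / (4 * d).
Proof.
  intros Hy HyM HM Hd. pose proof exp1_ge2 as He2.
  assert (Hee : exp 1 <= exp (exp 1)) by (apply exp_le_mono; lra).
  assert (HlM : exp 1 <= ln M) by (rewrite <- (ln_exp (exp 1)); apply ln_le; [apply exp_pos|lra]).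
  assert (Hl0 : 0 <= ln (ln M)) by (rewrite <- ln_1; apply ln_le; lra).
  assert (0 <= ln (ln M) / (4 * d)) by (unfold Rdiv; apply Rmult_le_pos; [lra| left; apply Rinv_0_lt_compat; lra]).
  unfold phi. destruct Rle_dec as [He|He]; [|nra].
  assert (Hly : exp 1 <= ln y) by (rewrite <- (ln_exp (exp 1)); apply ln_le; [apply exp_pos|lra]).
  assert (Hu : ln (ln y) <= ln (ln M)) by (apply ln_le; [lra|apply ln_le; lra]).
  set (l := ln (ln M)) in *.
  apply Rle_trans with (d * y + l / (4 * d)); [|lra].
  apply sqrt_le_b; [nra|].
  assert (Hk2 : (d*y + l/(4*d))*(d*y + l/(4*d)) - (d*y - l/(4*d))*(d*y - l/(4*d)) = l * y) by (field; lra).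
  pose proof (pow2_ge_0 (d*y - l/(4*d))). nra.
Qed.

Lemma Rabs_split x a : Rabs x <= a -> - a <= x /\ x <= a.
Proof. unfold Rabs; destruct Rcase_abs; lra. Qed.

Lemma partial_mono (U : nat -> R) a b : (forall k, (1 <= k)%nat -> 0 <= U k) -> (a <= b)%nat -> partial U a <= partial U b.
Proof.
  intros HU Hab. induction Hab; [lra|]. unfold partial in *; simpl.
  pose proof (HU (S m) ltac:(lia)). lra.
Qed.

Lemma arrival_bound J (U : nat -> nat -> R) A lam Ga G i t :
  IsArrivalCount J U A -> (i < J)%nat -> 0 <= t -> 0 < lam i -> 0 <= G -> Ga i <= G ->
  (forall k, (1 <= k)%nat -> Rabs (partial (U i) k - / lam i * INR k) <= Ga i * phi (INR k)) ->
  INR (A i t) <= lam i * (t + G * phi (INR (A i t))).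
Proof.
  intros HA Hi Ht Hl HG HGa HUb. pose proof (phi_nonneg (INR (A i t))).
  destruct (A i t) as [|n] eqn:En.
  - simpl in *. assert (0 <= G * phi 0) by (apply Rmult_le_pos; auto; apply phi_nonneg). nra.
  - destruct (HA i t Hi Ht) as [Hp _]. rewrite En in Hp.
    specialize (HUb (S n) ltac:(lia)). destruct (Rabs_split _ _ HUb) as [H1 H2].
    assert (Ga i * phi (INR (S n)) <= G * phi (INR (S n))) by nra.
    assert (/ lam i * INR (S n) <= t + G * phi (INR (S n))) by lra.
    replace (INR (S n)) with (lam i * (/ lam i * INR (S n))) at 1 by (field; lra).
    apply Rmult_le_compat_l; lra.
Qed.

Lemma service_bound (V : nat -> R) mu Gs G m :
  0 < mu -> 0 <= G -> Gs <= G ->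
  (forall k, (1 <= k)%nat -> Rabs (partial V k - / mu * INR k) <= Gs * phi (INR k)) ->
  partial V m <= INR m / mu + G * phi (INR m).
Proof.
  intros Hm HG HGs HV. pose proof (phi_nonneg (INR m)).
  destruct m as [|n].
  - unfold partial; simpl rsum. replace (INR 0 / mu) with 0 by (simpl; field; lra). assert (0 <= G * phi (INR 0)) by (apply Rmult_le_pos; auto). lra.
  - specialize (HV (S n) ltac:(lia)). destruct (Rabs_split _ _ HV) as [H1 H2].
    assert (Gs * phi (INR (S n)) <= G * phi (INR (S n))) by nra.
    unfold Rdiv. rewrite Rmult_comm. lra.
Qed.

Lemma A_rc J (U : nat -> nat -> R) A t : IsArrivalCount J U A ->
  (forall j k, (j < J)%nat -> (1 <= k)%nat -> 0 <= U j k) -> 0 <= t ->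
  exists d, 0 < d /\ forall s, t <= s < t + d -> forall i, (i < J)%nat -> A i s = A i t.
Proof.
  intros HA HU Ht.
  assert (forall n, (n <= J)%nat -> exists d, 0 < d /\ forall s, t <= s < t + d -> forall i, (i < n)%nat -> A i s = A i t).
  { induction n; intros Hn.
    - exists 1; split; [lra|]; intros; lia.
    - destruct (IHn ltac:(lia)) as [d [Hd Hs]].
      destruct (HA n t ltac:(lia) Ht) as [Hp Hmax].
      set (d2 := partial (U n) (S (A n t)) - t).
      assert (Hd2 : 0 < d2).
      { unfold d2. destruct (Rle_dec (partial (U n) (S (A n t))) t) as [Hle|Hle].
        - specialize (Hmax _ Hle). lia.
        - lra. }
      exists (Rmin d d2). split; [apply Rmin_glb_lt; auto|].
      intros s [Hs1 Hs2] i Hi.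
      assert (s < t + d) by (pose proof (Rmin_l d d2); lra).
      assert (s < t + d2) by (pose proof (Rmin_r d d2); lra).
      destruct (Nat.eq_dec i n) as [->|]; [|apply Hs; auto; lia].
      destruct (HA n s ltac:(lia) ltac:(lra)) as [Hps Hmaxs].
      assert (Hge : (A n t <= A n s)%nat) by (apply Hmaxs; lra).
      destruct (Nat.eq_dec (A n s) (A n t)); auto.
      assert (partial (U n) (S (A n t)) <= partial (U n) (A n s)).
      { apply partial_mono; [intros; apply HU; auto; lia| lia]. }
      unfold d2 in *. lra. }
  destruct (H J (le_n _)) as [d [Hd Hs]]. exists d; auto.
Qed.

Lemma busy_exists (W : R -> R) T : 0 <= T -> W T <= 0 ->
  (forall t, 0 <= t -> exists d, 0 < d /\ forall s, t <= s < t + d -> W s = W t - (s - t)) ->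
  exists B, IsBusyEnd W B /\ B <= T.
Proof.
  intros HT HWT Hrc.
  set (E := fun y => 0 <= - y /\ W (- y) <= 0).
  assert (Hb : bound E) by (exists 0; intros y [Hy _]; lra).
  assert (Hne : exists y, E y) by (exists (-T); unfold E; rewrite Ropp_involutive; split; lra).
  destruct (completeness E Hb Hne) as [m [Hub Hlub]].
  assert (HTm : -T <= m) by (apply Hub; unfold E; rewrite Ropp_involutive; split; lra).
  assert (Hm0 : m <= 0) by (apply Hlub; intros y [Hy _]; lra).
  exists (-m). split; [|lra].
  assert (Hlow : forall t, 0 <= t -> W t <= 0 -> -m <= t).
  { intros t H0 H1. assert (E (-t)) by (unfold E; rewrite Ropp_involutive; split; lra).
    specialize (Hub _ H). lra. }
  split; [lra|]. split.
  - intros t [H0 H1]. destruct (Rle_dec (W t) 0) as [Hle|Hle]; [|lra].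
    specialize (Hlow t H0 Hle). lra.
  - destruct (Rle_dec (W (-m)) 0) as [Hle|Hle]; auto.
    exfalso. destruct (Hrc (-m) ltac:(lra)) as [d [Hd Hs]].
    set (e := Rmin d (W (-m))).
    assert (He : 0 < e) by (apply Rmin_glb_lt; lra).
    assert (m <= m - e); [|lra].
    apply Hlub. intros y [Hy1 Hy2].
    specialize (Hub y (conj Hy1 Hy2)).
    destruct (Rlt_dec (- y) (-m + e)) as [Hlt|Hlt]; [|lra].
    assert (Hw := Hs (-y) ltac:(pose proof (Rmin_l d (W (-m))); unfold e in *; lra)).
    pose proof (Rmin_r d (W (-m))). unfold e in *. lra.
Qed.

Lemma N_pos J N P : (0 < J)%nat ->
  (forall i j, (i < J)%nat -> (j < J)%nat -> nmatpow J P N i j = 0%nat) -> (1 <= N)%nat.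
Proof. intros HJ H. destruct N; [|lia]. specialize (H 0%nat 0%nat HJ HJ). simpl in H. discriminate. Qed.

Lemma invIPT_diag J N P i : (1 <= N)%nat -> (1 <= invIPT J N P i i)%nat.
Proof. intros HN. unfold invIPT. eapply Nat.le_trans; [|apply (nsum_ge_term _ _ 0%nat); lia].
  simpl. rewrite Nat.eqb_refl. lia. Qed.

Lemma lambar_ge J N P lam i : (1 <= N)%nat -> (i < J)%nat -> (forall k, (k < J)%nat -> 0 <= lam k) ->
  lam i <= lambar J N P lam i.
Proof. intros HN Hi Hl. unfold lambar.
  eapply Rle_trans; [|apply (rsum_ge_term _ _ i); auto; intros; apply Rmult_le_pos; [apply pos_INR|auto]].
  pose proof (le_INR _ _ (invIPT_diag J N P i HN)). simpl in H. pose proof (Hl i Hi). nra. Qed.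

Lemma lambar_nonneg J N P lam i : (forall k, (k < J)%nat -> 0 <= lam k) -> 0 <= lambar J N P lam i.
Proof. intros Hl. unfold lambar. apply rsum_nonneg. intros; apply Rmult_le_pos; [apply pos_INR|auto]. Qed.

Lemma Abar_bound J N P A lam t c j :
  (forall i, (i < J)%nat -> INR (A i t) <= lam i * c) ->
  INR (Abar J N P A j t) <= lambar J N P lam j * c.
Proof. intros H. unfold Abar, lambar. rewrite INR_nsum.
  rewrite Rmult_comm, <- rsum_scal. apply rsum_le. intros i Hi. rewrite mult_INR.
  pose proof (pos_INR (invIPT J N P j i)). specialize (H i Hi). nra. Qed.

Lemma W_bound J N P A V lam mu G Gs Phi c t :
  0 <= G -> (forall j, (j < J)%nat -> 0 < mu j) -> (forall j, (j < J)%nat -> Gs j <= G) ->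
  (forall j k, (j < J)%nat -> (1 <= k)%nat ->
     Rabs (partial (V j) k - / mu j * INR k) <= Gs j * phi (INR k)) ->
  (forall i, (i < J)%nat -> INR (A i t) <= lam i * c) ->
  (forall j, (j < J)%nat -> phi (INR (Abar J N P A j t)) <= Phi) ->
  workload J N P A V t <= rho J N P lam mu * c + INR J * (G * Phi) - t.
Proof.
  intros HG Hmu HGs HV HA HPhi. unfold workload.
  apply Rplus_le_compat_r.
  rewrite <- rsum_const.
  unfold rho. rewrite Rmult_comm, <- rsum_scal, <- rsum_plus.
  apply rsum_le. intros j Hj.
  eapply Rle_trans; [apply (service_bound _ (mu j) (Gs j) G); auto|].
  pose proof (Abar_bound J N P A lam t c j HA). specialize (HPhi j Hj). specialize (Hmu j Hj).
  apply Rplus_le_compat.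
  - unfold Rdiv. replace (c * (lambar J N P lam j * / mu j)) with ((lambar J N P lam j * c) * / mu j) by ring.
    apply Rmult_le_compat_r; auto. left; apply Rinv_0_lt_compat; auto.
  - apply Rmult_le_compat_l; auto.
Qed.

Lemma Wsimp G L x q j K t l :
  0 < G -> 0 < L -> x = L * G -> 1 <= x -> 0 < q <= 1 -> 0 <= j -> 1 + j <= K -> 0 <= t -> 0 <= l ->
  let d := q / (4 * K * x) in
  let Phi := 1 + d * (L * (2 * t + 2 * G + 4 * G * x * ln (2 * x))) + l / (4 * d) in
  (1 - q) * (t + G * Phi) + j * (G * Phi) - t <=
  - (q * t / 2) + ((1 + j) * G + G / 2 + G * x * ln (2 * x) + K ^ 2 * G * x * l / q).
Proof.
  intros HG HL Hx Hx1 Hq Hj HK Ht Hl d Phi.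
  assert (Hl2 : 0 <= ln (2 * x)) by (rewrite <- ln_1; apply ln_le; lra).
  assert (HK0 : 0 < K) by lra.
  assert (Hd : 0 < d) by (unfold d; apply Rdiv_lt_0_compat; nra).
  assert (HPhi0 : 0 <= Phi).
  { unfold Phi. assert (0 <= l / (4 * d)) by (apply Rmult_le_pos; [lra|left; apply Rinv_0_lt_compat; lra]).
    assert (0 <= d * (L * (2 * t + 2 * G + 4 * G * x * ln (2 * x)))); [|lra].
    apply Rmult_le_pos; [lra|]. apply Rmult_le_pos; [lra|]. assert (0 <= 4 * G * x * ln (2 * x)) by (apply Rmult_le_pos; [nra|lra]). lra. }
  assert (Hstep : (1 - q) * (t + G * Phi) + j * (G * Phi) - t <= - q * t + (1 + j) * (G * Phi)) by (assert (0 <= q * (G * Phi)) by (apply Rmult_le_pos; [lra| apply Rmult_le_pos; lra]); nra).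
  eapply Rle_trans; [apply Hstep|].
  assert (E1 : G * Phi = G + (q / (4 * K)) * (2 * t) + (q / (4 * K)) * (2 * G + 4 * G * x * ln (2 * x)) + K * G * x * l / q).
  { unfold Phi, d. rewrite Hx. field. nra. }
  rewrite E1.
  set (a := q / (4 * K)).
  assert (Ha : 0 <= a) by (unfold a; apply Rmult_le_pos; [lra|left; apply Rinv_0_lt_compat; lra]).
  assert (Ha2 : (1 + j) * a <= q / 4) by (unfold a; replace ((1 + j) * (q / (4 * K))) with (q / 4 * ((1 + j) / K)) by (field; lra);
     assert ((1 + j) / K <= 1) by (apply Rmult_le_reg_r with K; [lra|]; unfold Rdiv; rewrite Rmult_assoc, Rinv_l; lra); nra).
  assert (Hb : (1 + j) * (K * G * x * l / q) <= K ^ 2 * G * x * l / q).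
  { unfold Rdiv. assert (0 <= G * x * l * / q) by (apply Rmult_le_pos; [apply Rmult_le_pos; [nra|lra]|left; apply Rinv_0_lt_compat; lra]).
    replace ((1 + j) * (K * G * x * l * / q)) with ((1 + j) * K * (G * x * l * / q)) by ring.
    replace (K ^ 2 * G * x * l * / q) with (K * K * (G * x * l * / q)) by ring.
    apply Rmult_le_compat_r; auto. nra. }
  assert (0 <= 2 * G + 4 * G * x * ln (2 * x)) by (assert (0 <= 4 * G * x * ln (2 * x)) by (apply Rmult_le_pos; [nra|lra]); lra).
  assert (Hc : (1 + j) * a * (2 * G + 4 * G * x * ln (2 * x)) <= G / 2 + G * x * ln (2 * x)) by nra.
  assert (Hdd : (1 + j) * a * (2 * t) <= q * t / 2) by nra.
  nra.
Qed.

Lemma ln_pos_gt1 a : 1 < a -> 0 < ln a.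
Proof. intros. rewrite <- ln_1. apply ln_increasing; lra. Qed.

Lemma lnln_mono a b : 1 < a -> a <= b -> ln (ln a) <= ln (ln b).
Proof. intros. apply ln_le; [apply ln_pos_gt1; auto| apply ln_le; lra]. Qed.

Lemma lnln_ge1 z : exp (exp 1) <= z -> 1 <= ln (ln z).
Proof. intros H. pose proof exp1_ge2.
  assert (1 < exp (exp 1)) by (pose proof (exp_ineq1_le (exp 1)); lra).
  pose proof (lnln_mono _ _ H1 H) as H2. rewrite !ln_exp in H2. auto. Qed.

Lemma ll_facts x K q :
  exp (2 * exp 1) <= x -> 7 <= K -> 0 < q <= 1 ->
  let Y := K * x ^ 2 / q in
  5 <= x /\ 175 <= Y /\ 1 <= ln (ln Y) /\ ln (ln Y) <= ln (ln (2 * Y)) /\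
  forall M, 1 < M -> M <= 10 * Y ^ 2 * ln (ln (2 * Y)) + 2 * x + 4 * x ^ 2 * ln (2 * x) ->
    ln (ln M) <= 2 * ln (ln Y).
Proof.
  intros Hx HK Hq Y. pose proof exp1_ge2 as He.
  assert (Hx5 : 5 <= x) by (pose proof (exp_ineq1_le (2 * exp 1)); lra).
  assert (HY : 7 * x ^ 2 <= Y).
  { unfold Y. replace (K * x ^ 2 / q) with ((K * x ^ 2) * / q) by reflexivity. assert (/ q >= 1) by (apply Rle_ge; rewrite <- Rinv_1; apply Rinv_le_contravar; lra). assert (0 <= K * x ^ 2) by nra. nra. }
  assert (HYx : x <= Y) by nra.
  assert (HY175 : 175 <= Y) by nra.
  assert (Hee : exp (exp 1) <= Y).
  { apply Rle_trans with x; auto. apply Rle_trans with (exp (2 * exp 1)); auto. apply exp_le_mono; lra. }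
  assert (He4 : exp 4 <= Y).
  { apply Rle_trans with x; auto. apply Rle_trans with (exp (2 * exp 1)); auto. apply exp_le_mono; lra. }
  assert (H1 := lnln_ge1 _ Hee).
  split; [auto|]. split; [auto|]. split; [auto|]. split; [apply lnln_mono; lra|].
  intros M HM1 HM.
  assert (HlnY : 4 <= ln Y) by (rewrite <- (ln_exp 4); apply ln_le; [apply exp_pos|auto]).
  assert (Hl2Y : ln (ln (2 * Y)) <= 2 * Y).
  { pose proof (ln_le_m1 (2 * Y) ltac:(lra)).
    assert (0 < ln (2 * Y)) by (apply ln_pos_gt1; lra).
    pose proof (ln_le_m1 (ln (2 * Y)) H0). lra. }
  assert (Hl2x : ln (2 * x) <= 2 * x) by (pose proof (ln_le_m1 (2 * x) ltac:(lra)); lra).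
  assert (HMY : M <= Y ^ 4).
  { assert (0 <= Y ^ 2) by nra.
    assert (10 * Y ^ 2 * ln (ln (2 * Y)) <= 20 * Y ^ 3) by nra.
    assert (4 * x ^ 2 * ln (2 * x) <= 8 * x ^ 3) by nra.
    assert (x ^ 3 <= Y ^ 3 / 27).
    { assert (3 * x <= Y) by nra. assert (0 <= 3 * x) by lra.
      replace (Y ^ 3 / 27) with ((Y/3)^3) by field.
      apply pow_incr. lra. }
    assert (x <= x ^ 3) by nra.
    assert (21 * Y ^ 3 <= Y ^ 4) by nra. nra. }
  assert (ln (ln M) <= ln (ln (Y ^ 4))) by (apply lnln_mono; lra).
  rewrite ln_pow in H by lra.
  rewrite ln_mult in H by (simpl; lra).
  assert (ln (INR 4) <= ln (ln Y)) by (apply ln_le; [simpl; lra| simpl; lra]).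
  lra.
Qed.

Lemma final_sup x G K j q ll l :
  5 <= x -> 0 < G -> 7 <= K -> 0 <= j -> 1 + j <= K -> 0 < q <= 1 -> 1 <= ll -> 0 <= l -> l <= 2 * ll ->
  (1 + j) * G + G / 2 + G * x * ln (2 * x) + K ^ 2 * G * x * l / q <= 2 * K ^ 2 * x ^ 3 * G / q * ll + G + 3 * x ^ 2 * G.
Proof.
  intros Hx HG HK Hj HjK Hq Hll Hl Hl2.
  assert (Hl2x : ln (2 * x) <= 2 * x) by (pose proof (ln_le_m1 (2 * x) ltac:(lra)); lra).
  assert (H1 : G * x * ln (2 * x) <= 2 * x ^ 2 * G) by (assert (0 <= G * x) by nra; nra).
  assert (Hiq : 1 <= / q) by (rewrite <- Rinv_1; apply Rinv_le_contravar; lra).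
  set (s := / q) in *.
  unfold Rdiv. fold s.
  assert (H2 : K ^ 2 * G * x * l * s <= 2 * K ^ 2 * G * x * ll * s).
  { assert (0 <= K ^ 2 * G * x * s) by (apply Rmult_le_pos; [|lra]; apply Rmult_le_pos; [|lra]; apply Rmult_le_pos; [nra|lra]).
    nra. }
  assert (H3 : 0 <= K ^ 2 * G * ll * s) by (apply Rmult_le_pos; [|lra]; apply Rmult_le_pos; [|lra]; apply Rmult_le_pos; [nra|lra]).
  assert (H4 : 2 * K ^ 2 * G * x * ll * s + K * G <= 2 * K ^ 2 * x ^ 3 * G * s * ll).
  { assert (x + 1 <= x ^ 3) by nra.
    assert (K * G <= K ^ 2 * G * ll * s).
    { assert (K <= K ^ 2) by (simpl; nra). assert (K * G <= K ^ 2 * G) by (apply Rmult_le_compat_r; lra). assert (1 <= ll * s) by nra. nra. }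
    nra. }
  nra.
Qed.

Lemma final_busy x G K j q ll l2 l :
  5 <= x -> 0 < G -> 7 <= K -> 0 <= j -> 1 + j <= K -> 0 < q <= 1 -> 1 <= ll -> ll <= l2 -> 0 <= l -> l <= 2 * ll ->
  - (q * (5 * K ^ 2 * x ^ 3 * G / q ^ 2 * l2) / 2) +
  ((1 + j) * G + G / 2 + G * x * ln (2 * x) + K ^ 2 * G * x * l / q) <= 0.
Proof.
  intros Hx HG HK Hj HjK Hq Hll Hl2 Hl Hl2'.
  pose proof (final_sup x G K j q ll l Hx HG HK Hj HjK Hq Hll Hl Hl2').
  replace (q * (5 * K ^ 2 * x ^ 3 * G / q ^ 2 * l2) / 2) with (5 / 2 * K ^ 2 * x ^ 3 * G / q * l2) by (field; lra).
  assert (Hiq : 1 <= / q) by (rewrite <- Rinv_1; apply Rinv_le_contravar; lra).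
  unfold Rdiv in *. set (s := / q) in *.
  assert (0 <= K ^ 2 * x ^ 3 * G * s) by (apply Rmult_le_pos; [|lra]; apply Rmult_le_pos; [|lra]; apply Rmult_le_pos; nra).
  assert (2 * K ^ 2 * x ^ 3 * G * s * ll <= 2 * K ^ 2 * x ^ 3 * G * s * l2) by nra.
  assert (G + 3 * x ^ 2 * G <= / 2 * K ^ 2 * x ^ 3 * G * s * l2).
  { assert (1 <= s * l2) by nra. assert (49 <= K ^ 2) by (simpl; nra). assert (25 <= x ^ 2) by (simpl; nra). assert (5 * x ^ 2 <= x ^ 3) by (simpl; nra). assert (0 <= x ^ 3) by (apply pow_le; lra). assert (2 + 6 * x ^ 2 <= K ^ 2 * x ^ 3) by nra.
    assert (0 <= K ^ 2 * x ^ 3 * G) by (apply Rmult_le_pos; nra). nra. }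
  nra.
Qed.

Lemma round1 lam L G x n t p : 0 < lam <= L -> 0 < G -> x = L * G -> 1 <= x -> 0 <= n -> 0 <= t ->
  n <= lam * (t + G * p) -> p <= 1 + n / (2 * x) + 2 * x * ln (2 * x) ->
  n <= lam * (2 * t + 2 * G + 4 * G * x * ln (2 * x)).
Proof.
  intros Hl HG Hx Hx1 Hn Ht H1 H2.
  assert (HlG : lam * G <= x) by (rewrite Hx; apply Rmult_le_compat_r; lra).
  assert (HlG0 : 0 < lam * G) by nra.
  assert (H3 : lam * G * p <= lam * G * (1 + n / (2 * x) + 2 * x * ln (2 * x))) by (apply Rmult_le_compat_l; lra).
  assert (H4 : lam * G * (n / (2 * x)) <= n / 2).
  { replace (lam * G * (n / (2 * x))) with ((lam * G / x) * (n / 2)) by (field; lra).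
    assert (lam * G / x <= 1) by (apply Rmult_le_reg_r with x; [lra|]; unfold Rdiv; rewrite Rmult_assoc, Rinv_l; lra).
    assert (0 <= lam * G / x) by (apply Rmult_le_pos; [lra|left; apply Rinv_0_lt_compat; lra]). nra. }
  nra.
Qed.

Theorem theorem2
  (J N : nat) (P : nat -> nat -> nat)
  (U V : nat -> nat -> R) (A : nat -> R -> nat)
  (lam mu Ga Gs : nat -> R)
  (HJ : (0 < J)%nat)
  (HP01 : forall i j, (i < J)%nat -> (j < J)%nat -> (P i j <= 1)%nat)
  (HProw : forall i, (i < J)%nat -> (nsum J (P i) <= 1)%nat)
  (HPnil : forall i j, (i < J)%nat -> (j < J)%nat -> nmatpow J P N i j = 0%nat)
  (HU : forall j k, (j < J)%nat -> (1 <= k)%nat -> 0 <= U j k)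
  (HV : forall j k, (j < J)%nat -> (1 <= k)%nat -> 0 <= V j k)
  (HA : IsArrivalCount J U A)
  (Hlam : forall j, (j < J)%nat -> 0 < lam j)
  (Hmu : forall j, (j < J)%nat -> 0 < mu j)
  (Hrho : rho J N P lam mu < 1)
  (HGa : forall j, (j < J)%nat -> 0 <= Ga j)
  (HGs : forall j, (j < J)%nat -> 0 <= Gs j)
  (HUb : forall j k, (j < J)%nat -> (1 <= k)%nat ->
     Rabs (partial (U j) k - / lam j * INR k) <= Ga j * phi (INR k))
  (HVb : forall j k, (j < J)%nat -> (1 <= k)%nat ->
     Rabs (partial (V j) k - / mu j * INR k) <= Gs j * phi (INR k))
  (HGmin : forall j, (j < J)%nat ->
     exp (2 * exp 1) <= lam j * rmaxn J (fun i => Rmax (Ga i) (Gs i))) :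
  let G := rmaxn J (fun i => Rmax (Ga i) (Gs i)) in
  let L := rmaxn J (lambar J N P lam) in
  let K := INR (4 * J + 3) in
  let r := rho J N P lam mu in
  let W := workload J N P A V in
  exists B : R,
    IsBusyEnd W B /\
    B <= 5 * K ^ 2 * L ^ 3 * G ^ 4 / (1 - r) ^ 2
           * ln (ln (2 * K * L ^ 2 * G ^ 2 / (1 - r))) /\
    (forall t, 0 <= t <= B ->
       W t <= 2 * K ^ 2 * L ^ 3 * G ^ 4 / (1 - r)
                * ln (ln (K * L ^ 2 * G ^ 2 / (1 - r)))
              + G + 3 * L ^ 2 * G ^ 3).
Proof.
  intros G L K r W.
  assert (HN := N_pos J N P HJ HPnil).
  assert (Hlam0 : forall k, (k < J)%nat -> 0 <= lam k) by (intros; left; auto).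
  assert (HlbL : forall j, (j < J)%nat -> lambar J N P lam j <= L) by (intros; apply rmaxn_ge; auto).
  assert (HlamL : forall i, (i < J)%nat -> lam i <= L)
    by (intros; eapply Rle_trans; [apply lambar_ge; eauto| apply HlbL; auto]).
  assert (Hlb0 : forall j, 0 <= lambar J N P lam j) by (intros; apply lambar_nonneg; auto).
  assert (HGa_le : forall i, (i < J)%nat -> Ga i <= G)
    by (intros; eapply Rle_trans; [apply Rmax_l| apply (rmaxn_ge J (fun i => Rmax (Ga i) (Gs i)) i); auto]).
  assert (HGs_le : forall i, (i < J)%nat -> Gs i <= G)
    by (intros; eapply Rle_trans; [apply Rmax_r| apply (rmaxn_ge J (fun i => Rmax (Ga i) (Gs i)) i); auto]).
  assert (HG00 : 0 <= G) by apply rmaxn_nonneg.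
  pose proof (HGmin 0%nat HJ) as Hm0. fold G in Hm0.
  pose proof (exp_pos (2 * exp 1)) as Hep.
  pose proof (Hlam 0%nat HJ) as Hl0. pose proof (HlamL 0%nat HJ) as HlL0.
  assert (HG0 : 0 < G) by (destruct HG00 as [|HG]; auto; rewrite <- HG in Hm0; lra).
  assert (HL0 : 0 < L) by lra.
  set (x := L * G).
  assert (Hx : exp (2 * exp 1) <= x) by (unfold x; eapply Rle_trans; [apply Hm0| apply Rmult_le_compat_r; lra]).
  assert (Hr0 : 0 <= r).
  { unfold r, rho. apply rsum_nonneg; intros. unfold Rdiv; apply Rmult_le_pos; [apply Hlb0| left; apply Rinv_0_lt_compat; auto]. }
  set (q := 1 - r).
  assert (Hq : 0 < q <= 1) by (unfold q; fold r in Hrho; lra).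
  assert (HKe : K = 4 * INR J + 3) by (unfold K; rewrite plus_INR, mult_INR; simpl; ring).
  pose proof (pos_INR J) as HJ0.
  assert (HK7 : 7 <= K).
  { rewrite HKe. assert (1 <= INR J) by (apply (le_INR 1); lia). lra. }
  assert (HJK : 1 + INR J <= K) by lra.
  destruct (ll_facts x K q Hx HK7 Hq) as [Hx5 [HY175 [Hll1 [Hll2 Hmm]]]].
  set (Y := K * x ^ 2 / q) in *.
  assert (EY : K * L ^ 2 * G ^ 2 / q = Y) by (unfold Y, x, q; field; fold q; lra).
  assert (EY2 : 2 * K * L ^ 2 * G ^ 2 / q = 2 * Y) by (unfold Y, x, q; field; fold q; lra).
  rewrite EY, EY2.
  set (ll := ln (ln Y)) in *. set (l2 := ln (ln (2 * Y))) in *.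
  assert (ET : 5 * K ^ 2 * L ^ 3 * G ^ 4 / q ^ 2 * l2 = 5 * K ^ 2 * x ^ 3 * G / q ^ 2 * l2)
    by (unfold x, q; field; fold q; lra).
  assert (ES : 2 * K ^ 2 * L ^ 3 * G ^ 4 / q * ll + G + 3 * L ^ 2 * G ^ 3
               = 2 * K ^ 2 * x ^ 3 * G / q * ll + G + 3 * x ^ 2 * G)
    by (unfold x, q; field; fold q; lra).
  rewrite ET, ES.
  set (T := 5 * K ^ 2 * x ^ 3 * G / q ^ 2 * l2).
  assert (HT0 : 0 <= T).
  { unfold T. apply Rmult_le_pos; [|lra]. unfold Rdiv. apply Rmult_le_pos.
    - apply Rmult_le_pos; [|lra]. apply Rmult_le_pos; [|apply pow_le; lra]. apply Rmult_le_pos; [lra|apply pow_le; lra].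
    - left; apply Rinv_0_lt_compat; apply pow_lt; lra. }
  assert (Hl2x : 0 <= ln (2 * x)) by (rewrite <- ln_1; apply ln_le; lra).
  set (D := fun t => 2 * t + 2 * G + 4 * G * x * ln (2 * x)).
  assert (HD0 : forall t, 0 <= t -> 0 <= D t).
  { intros t Ht; unfold D. assert (0 <= 4 * G * x * ln (2 * x)) by (apply Rmult_le_pos; [nra|lra]). lra. }
  set (Mmax := L * D T).
  assert (HMform : Mmax = 10 * Y ^ 2 * l2 + 2 * x + 4 * x ^ 2 * ln (2 * x))
    by (unfold Mmax, D, T, Y, x; field; lra).
  assert (HM2x : 2 * x <= Mmax).
  { unfold Mmax, D. unfold x. assert (0 <= L * (2 * T + 4 * G * (L * G) * ln (2 * (L * G)))); [|nra].
    apply Rmult_le_pos; [lra|]. assert (0 <= 4 * G * (L * G) * ln (2 * (L * G))) by (apply Rmult_le_pos; [nra|fold x; lra]). lra. }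
  assert (HMee : exp (exp 1) <= Mmax).
  { assert (exp (exp 1) <= exp (2 * exp 1)) by (apply exp_le_mono; pose proof exp1_ge2; lra). lra. }
  set (l := ln (ln Mmax)).
  assert (Hl1 : 1 <= l) by (apply lnln_ge1; auto).
  assert (Hl2 : l <= 2 * ll) by (apply Hmm; [lra| rewrite HMform; lra]).
  set (C := (1 + INR J) * G + G / 2 + G * x * ln (2 * x) + K ^ 2 * G * x * l / q).
  assert (Key : forall t, 0 <= t <= T -> W t <= - (q * t / 2) + C).
  { intros t [Ht0 HtT].
    set (d := q / (4 * K * x)).
    assert (Hd : 0 < d) by (unfold d; apply Rdiv_lt_0_compat; nra).
    set (Phi := 1 + d * (L * D t) + l / (4 * d)).
    assert (HDt : D t <= D T) by (unfold D; lra).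
    assert (Hphi : forall y, 0 <= y -> y <= L * D t -> phi y <= Phi).
    { intros y Hy0 Hy. eapply Rle_trans; [apply (phi_local y Mmax d); auto|].
      - unfold Mmax. eapply Rle_trans; [apply Hy|]. apply Rmult_le_compat_l; lra.
      - unfold Phi. assert (d * y <= d * (L * D t)) by (apply Rmult_le_compat_l; lra). fold l. lra. }
    assert (Har : forall i, (i < J)%nat -> INR (A i t) <= lam i * (t + G * phi (INR (A i t))))
      by (intros; apply (arrival_bound J U A lam Ga G i t); auto).
    assert (Hr1 : forall i, (i < J)%nat -> INR (A i t) <= lam i * D t).
    { intros i Hi. unfold D. apply (round1 (lam i) L G x (INR (A i t)) t (phi (INR (A i t)))).
      all: try solve [split; auto | auto | lra | apply pos_INR | apply phi_global; [lra|apply pos_INR]]. }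
    assert (Hn2 : forall i, (i < J)%nat -> INR (A i t) <= lam i * (t + G * Phi)).
    { intros i Hi. eapply Rle_trans; [apply Har; auto|]. apply Rmult_le_compat_l; [auto|].
      apply Rplus_le_compat_l. apply Rmult_le_compat_l; [lra|]. apply Hphi; [apply pos_INR|].
      eapply Rle_trans; [apply Hr1; auto|]. apply Rmult_le_compat_r; [apply HD0; lra|auto]. }
    assert (HAbphi : forall j, (j < J)%nat -> phi (INR (Abar J N P A j t)) <= Phi).
    { intros j Hj. apply Hphi; [apply pos_INR|].
      eapply Rle_trans; [apply (Abar_bound J N P A lam t (D t) j Hr1)|].
      apply Rmult_le_compat_r; [apply HD0; lra| auto]. }
    pose proof (W_bound J N P A V lam mu G Gs Phi (t + G * Phi) t HG00 Hmu HGs_le HVb Hn2 HAbphi) as HW.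
    unfold W. fold r in HW. replace r with (1 - q) in HW by (unfold q; ring).
    eapply Rle_trans; [apply HW|].
    pose proof (Wsimp G L x q (INR J) K t l HG0 HL0 eq_refl ltac:(lra) Hq HJ0 HJK Ht0 ltac:(lra)) as HS.
    simpl in HS. unfold C. unfold Phi, d. unfold D. exact HS. }
  assert (Hrc : forall t, 0 <= t -> exists d, 0 < d /\ forall s, t <= s < t + d -> W s = W t - (s - t)).
  { intros t Ht. destruct (A_rc J U A t HA HU Ht) as [d [Hd Hs]]. exists d. split; auto.
    intros s Hs'. unfold W, workload.
    rewrite (rsum_ext J (fun j => partial (V j) (Abar J N P A j s)) (fun j => partial (V j) (Abar J N P A j t))). ring.
    intros j Hj. f_equal. unfold Abar. apply nsum_ext. intros i Hi. rewrite (Hs s Hs' i Hi). auto. }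
  assert (HWT : W T <= 0).
  { eapply Rle_trans; [apply Key; lra|]. unfold T, C.
    apply (final_busy x G K (INR J) q ll l2 l); auto; lra. }
  destruct (busy_exists W T HT0 HWT Hrc) as [B [HB HBT]].
  exists B. split; [auto|]. split; [auto|].
  intros t [Ht0 HtB].
  eapply Rle_trans; [apply Key; lra|].
  assert (0 <= q * t / 2) by (apply Rmult_le_pos; [nra|lra]).
  pose proof (final_sup x G K (INR J) q ll l Hx5 HG0 HK7 HJ0 HJK Hq Hll1 ltac:(lra) Hl2).
  unfold C. lra.
Qed.
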